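(* Let $\mathcal{A}$ and $\mathcal{B}$ be dual Banach algebras and let $\theta:\mathcal{A}\to\mathcal{B}$ be a continuous surjective algebra homomorphism which is also weak$^*$-weak$^*$ continuous. If $\mathcal{A}$ is Johnson pseudo-Connes amenable, then $\mathcal{B}$ is Johnson pseudo-Connes amenable.
   Context: A dual Banach algebra is a Banach algebra $\mathcal{A}$ together with a closed $\mathcal{A}$-submodule $\mathcal{A}_*$ of $\mathcal{A}^*$ such that $\mathcal{A}=(\mathcal{A}_* )^*$; weak$^*$ topologies refer to these preduals. For a bimodule $E$, $\sigma wc(E)$ is the set of $x\in E$ for which $a\mapsto a\cdot x$, $a\mapsto x\cdot a$ are weak$^*$-weak continuous. $\mathcal{A}\hat{\otimes}\mathcal{A}$ has actions $a\cdot(b\otimes c)=ab\otimes c$, $(b\otimes c)\cdot a=b\otimes ca$; duals carry the dual actions. $\pi_{\mathcal{A}}$ is the multiplication map $\mathcal{A}\hat{\otimes}\mathcal{A}\to\mathcal{A}$, $i_{\mathcal{A}_*}:\mathcal{A}_*\hookrightarrow\mathcal{A}^*$ the canonical embedding. $\mathcal{A}$ is Johnson pseudo-Connes amenable if there is a (not necessarily bounded) net $(m_\alpha)$ in $(\mathcal{A}\hat{\otimes}\mathcal{A})^{**}$ with $\langle T,a\cdot m_\alpha\rangle=\langle T,m_\alpha\cdot a\rangle$ for all $a\in\mathcal{A}$, $T\in\sigma wc((\mathcal{A}\hat{\otimes}\mathcal{A})^* )$, $\alpha$, and $i_{\mathcal{A}_*}^*\pi_{\mathcal{A}}^{**}(m_\alpha)a\to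 a$ for every $a\in\mathcal{A}$ (and analogously for $\mathcal{B}$). *)

(* Defs.v *)
From HB Require Import structures.
From mathcomp Require Import all_boot all_order all_algebra.
From mathcomp Require Import all_classical all_reals all_analysis.
Set Implicit Arguments. Unset Strict Implicit. Unset Printing Implicit Defensive.
Import Order.TTheory GRing.Theory Num.Theory.
Import numFieldNormedType.Exports.
Local Open Scope classical_set_scope.
Local Open Scope ring_scope.

Definition lin {K : numFieldType} {V W : lmodType K} (f : V -> W) : Prop :=
  forall (k : K) (x y : V), f (k *: x + y) = k *: f x + f y.

Definition fbound {K : numFieldType} {A : normedModType K} (phi : A -> K) (D : K) : Prop :=
  forall b : A, `|phi b| <= D * `|b|.

Definition bfun {K : numFieldType} {A : normedModType K} (phi : A -> K) : Prop :=
  lin (phi : A -> K^o) /\ exists C : K, fbound phi C.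

Definition banach_algebra {K : numFieldType} {A : completeNormedModType K}
    (mul : A -> A -> A) : Prop :=
  (forall a, lin (mul a)) /\ (forall b, lin (fun a => mul a b)) /\
  (forall a b c, mul a (mul b c) = mul (mul a b) c) /\
  (forall a b, `|mul a b| <= `|a| * `|b|).

(* (A, mul) with predual Astar \subset A^* is a dual Banach algebra:
   Astar is a norm-closed A-submodule of A^*, and the canonical map
   A -> (Astar)^*, a |-> (phi |-> phi a), is an isometric isomorphism. *)
Definition dual_banach_algebra {K : numFieldType} {A : completeNormedModType K}
    (mul : A -> A -> A) (Astar : set (A -> K)) : Prop :=
  banach_algebra mul /\
  (forall phi, Astar phi -> bfun phi) /\
  Astar (fun _ => 0) /\
  (forall (k : K) phi psi, Astar phi -> Astar psi -> Astar (fun b => k * phi b + psi b)) /\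
  (forall (a : A) phi, Astar phi ->
     Astar (fun b => phi (mul b a)) /\ Astar (fun b => phi (mul a b))) /\
  (forall phi, bfun phi ->
     (forall e : K, 0 < e -> exists psi, Astar psi /\ fbound (fun b => phi b - psi b) e) ->
     Astar phi) /\
  (forall (a : A) (r : K), r < `|a| ->
     exists phi, Astar phi /\ fbound phi 1 /\ r < `|phi a|) /\
  (forall F : (A -> K) -> K,
     (forall (k : K) phi psi, Astar phi -> Astar psi ->
        F (fun b => k * phi b + psi b) = k * F phi + F psi) ->
     (exists C : K, forall phi (D : K), Astar phi -> 0 <= D -> fbound phi D ->
        `|F phi| <= C * D) ->
     exists a : A, forall phi, Astar phi -> F phi = phi a).

(* Continuity of f : X -> Y, where X carries the initial (weak) topology
   induced by the family F of scalar functions and Y the one induced by G. *)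
Definition wcont {K : numFieldType} {X Y : Type} (F : set (X -> K)) (G : set (Y -> K))
    (f : X -> Y) : Prop :=
  forall (x0 : X) (n : nat) (psi : 'I_n -> Y -> K) (eps : K),
    (forall j, G (psi j)) -> 0 < eps ->
    exists (m : nat) (phi : 'I_m -> X -> K) (delta : K),
      (forall i, F (phi i)) /\ 0 < delta /\
      forall x, (forall i, `|phi i x - phi i x0| < delta) ->
        forall j, `|psi j (f x) - psi j (f x0)| < eps.

(* (A \hat\otimes A)^* is identified with bounded bilinear forms on A x A *)
Definition bbound {K : numFieldType} {A : normedModType K} (T : A -> A -> K) (D : K) : Prop :=
  forall a c : A, `|T a c| <= D * (`|a| * `|c|).

Definition bbil {K : numFieldType} {A : normedModType K} (T : A -> A -> K) : Prop :=
  (forall a, lin (T a : A -> K^o)) /\ (forall c, lin ((fun a => T a c) : A -> K^o)) /\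
  exists C : K, bbound T C.

(* elements of (A \hat\otimes A)^** : bounded linear functionals on bbil *)
Definition bidual {K : numFieldType} {A : normedModType K} (m : (A -> A -> K) -> K) : Prop :=
  (forall (k : K) T S, bbil T -> bbil S ->
     m (fun a c => k * T a c + S a c) = k * m T + m S) /\
  exists C : K, forall T (D : K), bbil T -> 0 <= D -> bbound T D -> `|m T| <= C * D.

(* dual module actions on (A \hat\otimes A)^*:
   <a.T, b(x)c> = <T, b(x)ca>,  <T.a, b(x)c> = <T, ab(x)c> *)
Definition lact {K : numFieldType} {A : normedModType K} (mul : A -> A -> A)
    (a : A) (T : A -> A -> K) : A -> A -> K := fun b c => T b (mul c a).
Definition ract {K : numFieldType} {A : normedModType K} (mul : A -> A -> A)
    (T : A -> A -> K) (a : A) : A -> A -> K := fun b c => T (mul a b) c.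

(* sigma wc((A \hat\otimes A)^* ): weak*-weak continuity of a |-> a.T and a |-> T.a,
   the weak topology on (A \hat\otimes A)^* being induced by (A \hat\otimes A)^** *)
Definition swc {K : numFieldType} {A : normedModType K} (mul : A -> A -> A)
    (Astar : set (A -> K)) (T : A -> A -> K) : Prop :=
  bbil T /\
  wcont Astar (@bidual K A) (fun a => lact mul a T) /\
  wcont Astar (@bidual K A) (fun a => ract mul T a).

(* For m in (A\hat\otimes A)^**,
   a.m = m.a on sigma wc means m (T.a) = m (a.T); the element
   i^* _{A_* } pi^**(m) of (A_* )^* = A is the e in A with
   phi e = m (phi o pi) for every phi in A_*. *)
Definition johnson_pseudo_connes_amenable {K : numFieldType} {A : completeNormedModType K}
    (mul : A -> A -> A) (Astar : set (A -> K)) : Prop :=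
  exists (I : Type) (le : I -> I -> Prop),
    (exists i : I, True) /\ (forall i, le i i) /\
    (forall i j k, le i j -> le j k -> le i k) /\
    (forall i j, exists k, le i k /\ le j k) /\
    exists (m : I -> (A -> A -> K) -> K) (e : I -> A),
      (forall i, bidual (m i)) /\
      (forall i (a : A) T, swc mul Astar T -> m i (ract mul T a) = m i (lact mul a T)) /\
      (forall i phi, Astar phi -> phi (e i) = m i (fun b c => phi (mul b c))) /\
      (forall (a : A) (eps : K), 0 < eps ->
         exists i0, forall i, le i0 i -> `|mul (e i) a - a| < eps).

(* Main.v *)
Require Import Defs.
From HB Require Import structures.
From mathcomp Require Import all_boot all_order all_algebra.
From mathcomp Require Import all_classical all_reals all_analysis.
From mathcomp Require Import ring.
Import Order.TTheory GRing.Theory Num.Theory.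
Import numFieldNormedType.Exports.
Local Open Scope classical_set_scope.
Local Open Scope ring_scope.

Section Lin.
Variables (K : numFieldType) (V W : lmodType K) (f : V -> W).
Hypothesis hf : lin f.
Lemma lin0 : f 0 = 0.
Proof. have H := hf 1 0 0; rewrite !scale1r in H; rewrite !addr0 in H.
have := congr1 (fun z => z - f 0) H; by rewrite /= subrr addrK. Qed.
Lemma linZ k x : f (k *: x) = k *: f x.
Proof. by have := hf k x 0; rewrite !addr0 lin0 addr0. Qed.
Lemma linD x y : f (x + y) = f x + f y.
Proof. by have := hf 1 x y; rewrite !scale1r. Qed.
Lemma linB x y : f (x - y) = f x - f y.
Proof. by have := hf (-1) y x; rewrite !scaleN1r addrC [_ + f x]addrC. Qed.
End Lin.
Arguments lin0 {K V W f} hf.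
Arguments linZ {K V W f} hf k x.
Arguments linD {K V W f} hf x y.
Arguments linB {K V W f} hf x y.

Lemma lin_comp (K : numFieldType) (U V W : lmodType K) (f : U -> V) (g : V -> W) :
  lin f -> lin g -> lin (fun x => g (f x)).
Proof. by move=> hf hg k x y; rewrite hf hg. Qed.
Arguments lin_comp {K U V W f g}.

Lemma span_star (K : numFieldType) (V : lmodType K) (S : set (V -> K)) :
  S (fun _ => 0) -> (forall k phi psi, S phi -> S psi -> S (fun b => k * phi b + psi b)) ->
  forall n (f : 'I_n -> V -> K), (forall i, S (f i)) -> (forall i, lin (f i : V -> K^o)) ->
  forall g : V -> K, lin (g : V -> K^o) -> (forall x, (forall i, f i x = 0) -> g x = 0) -> S g.
Proof.
move=> S0 Slin; elim=> [|n IH] f Sf lf g lg hg.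
  have -> : g = (fun _ => 0) by apply: funext => x; apply: hg => -[].
  exact: S0.
pose f' := fun i : 'I_n => f (lift ord_max i).
pose h := f ord_max.
have lh : lin (h : V -> K^o) by exact: lf.
case: (pselect (exists x0, (forall i : 'I_n, f' i x0 = 0) /\ h x0 != 0)).
  case=> x0 [hx0 hh].
  pose c := g x0 / h x0.
  pose g' := fun x => g x - c * h x.
  have Sg' : S g'.
    apply: (IH f'); first (by move=> i; apply: Sf); first (by move=> i; apply: lf).
    - move=> k x y; rewrite /g' /= lg lh /GRing.scale /=; ring.
    - move=> x hx.
      pose y := x - (h x / h x0) *: x0.
      have hy : forall i, f i y = 0.
        move=> i; case: (unliftP ord_max i) => [j ->|->].
          have := hx j; have := hx0 j; rewrite /f' /y => h1 h2.
          by rewrite linB // linZ // h1 h2 /GRing.scale /= mulr0 subr0.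
        rewrite /y linB // linZ // /GRing.scale /= -/h divfK // subrr //.
      have := hg y hy; rewrite /y linB // linZ // /GRing.scale /= => /eqP.
      rewrite subr_eq0 => /eqP; rewrite /g' /c => ->; ring.
  have -> : g = (fun b => c * h b + g' b).
    by apply: funext => b; rewrite /g' addrC subrK.
  by apply: Slin => //; exact: Sf.
move=> nex; apply: (IH f'); first (by move=> i; apply: Sf); first (by move=> i; apply: lf); first by [].
move=> x hx; apply: hg => i.
case: (unliftP ord_max i) => [j ->|->]; first exact: hx.
apply: contra_notP nex => hn; exists x; split => //; exact/eqP.
Qed.
Set Implicit Arguments.

Lemma lin_bounded (K : numFieldType) (A B : normedModType K) (th : A -> B) :
  lin th -> continuous th -> exists M, 0 < M /\ forall a, `|th a| <= M * `|a|.
Proof.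
move=> hl hc.
have /cvgr_dist_lt H := hc 0.
move: (H 1 ltr01) => /nbhs_norm0P [d /= d0 Hd].
exists (2 / d); split; first by rewrite divr_gt0.
move=> a; have [->|an0] := eqVneq a 0.
  by rewrite lin0 // !normr0 mulr0.
have na : 0 < `|a| by rewrite normr_gt0.
pose k := d / (2 * `|a|).
have kp : 0 < k by rewrite divr_gt0 // mulr_gt0.
have hk : `|k *: a| < d.
  rewrite normrZ gtr0_norm // /k.
  have -> : d / (2 * `|a|) * `|a| = d / 2.
    by field; rewrite ?gt_eqF // ?pnatr_eq0.
  by rewrite ltr_pdivrMr // ltr_pMr // ltr1n.
have := Hd _ hk; rewrite /= lin0 // sub0r normrN linZ // normrZ gtr0_norm //.
rewrite -ltr_pdivlMl // => /ltW; rewrite mulr1 /k invf_div.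
by rewrite mulrAC mulrC mulrA.
Qed.

Lemma wcont_comp (K : numFieldType) (X Y Z W : Type) (F : set (X -> K)) (G : set (Y -> K))
  (H : set (Z -> K)) (H' : set (W -> K)) (f : X -> Y) (g : Y -> Z) (Phi : Z -> W) :
  wcont F G f -> wcont G H g -> (forall psi, H' psi -> H (fun z => psi (Phi z))) ->
  wcont F H' (fun x => Phi (g (f x))).
Proof.
move=> hf hg hP x0 n psi eps Hpsi eps0.
have [m [phi [delta [Gphi [d0 Hg]]]]] :=
  hg (f x0) n (fun j z => psi j (Phi z)) eps (fun j => hP _ (Hpsi j)) eps0.
have [m' [phi' [delta' [Fphi' [d0' Hf]]]]] := hf x0 m phi delta Gphi d0.
exists m', phi', delta'; split => //; split => // x hx j.
exact: (Hg (f x) (Hf x hx) j).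
Qed.

Lemma wstar_comp (K : numFieldType) (A B : normedModType K) (Astar : set (A -> K))
  (Bstar : set (B -> K)) (th : A -> B) (phi : B -> K) :
  Astar (fun _ => 0) ->
  (forall k phi psi, Astar phi -> Astar psi -> Astar (fun b => k * phi b + psi b)) ->
  (forall psi, Astar psi -> bfun psi) -> lin th -> wcont Astar Bstar th ->
  Bstar phi -> lin (phi : B -> K^o) -> Astar (fun a => phi (th a)).
Proof.
move=> S0 Slin Sb hl hw Bphi lphi.
have [m [f [d [Sf [d0 H]]]]] := hw 0 1 (fun _ => phi) 1 (fun _ => Bphi) ltr01.
have lf : forall i, lin (f i : A -> K^o) by move=> i; have [] := Sb _ (Sf i).
apply: (@span_star _ _ _ S0 Slin _ f Sf lf); first exact: lin_comp.
move=> x hx; apply/eqP/negPn/negP => hn.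
have hy : forall i, `|f i ((phi (th x))^-1 *: x) - f i 0| < d.
  by move=> i; rewrite (linZ (lf i)) hx (lin0 (lf i)) /GRing.scale /= mulr0 subr0 normr0.
have := H _ hy ord0.
by rewrite (linZ hl) (linZ lphi) (lin0 hl) (lin0 lphi) /GRing.scale /= mulVf // subr0 normr1 ltxx.
Qed.

Section Trans.
Variables (K : numFieldType) (A B : normedModType K) (th : A -> B) (M : K).
Hypotheses (hl : lin th) (hM : 0 <= M) (hb : forall a, `|th a| <= M * `|a|).

Definition Phi (T : B -> B -> K) : A -> A -> K := fun a c => T (th a) (th c).

Lemma bbound_comp T C : bbound T C -> bbound (Phi T) (`|C| * (M * M)).
Proof.
move=> hC a c; rewrite /Phi.
have p0 : 0 <= `|th a| * `|th c| by rewrite mulr_ge0.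
apply: le_trans (hC _ _) _.
rewrite -(ger0_norm (le_trans (normr_ge0 _) (hC (th a) (th c)))) normrM (ger0_norm p0).
apply: le_trans (_ : `|C| * ((M * `|a|) * (M * `|c|)) <= _).
  by apply: ler_wpM2l => //; apply: ler_pM => //; rewrite normr_ge0.
by rewrite le_eqVlt; apply/orP; left; apply/eqP; ring.
Qed.

Lemma bbil_comp T : bbil T -> bbil (Phi T).
Proof.
move=> [l1 [l2 [C hC]]]; split; [|split].
- by move=> a; exact: (lin_comp hl (l1 (th a))).
- by move=> c; exact: (lin_comp hl (l2 (th c))).
- by exists (`|C| * (M * M)); exact: bbound_comp.
Qed.

Lemma bidual_comp m : bidual m -> bidual (fun T => m (Phi T)).
Proof.
move=> [lm [C hC]]; split.
  by move=> k T S bT bS; exact: (lm k _ _ (bbil_comp bT) (bbil_comp bS)).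
exists (C * (M * M)) => T D bT D0 bD.
have := hC _ _ (bbil_comp bT) _ (bbound_comp bD).
rewrite (ger0_norm D0) -mulrA [D * _]mulrC; apply.
by rewrite mulr_ge0 // mulr_ge0.
Qed.
End Trans.
Arguments Phi {K A B} th T _ _.
Unset Implicit Arguments.
Theorem proposition2p8 (K : numFieldType) (A B : completeNormedModType K)
    (mulA : A -> A -> A) (mulB : B -> B -> B)
    (Astar : set (A -> K)) (Bstar : set (B -> K)) (theta : A -> B) :
  dual_banach_algebra mulA Astar ->
  dual_banach_algebra mulB Bstar ->
  lin theta ->
  (forall a b : A, theta (mulA a b) = mulB (theta a) (theta b)) ->
  continuous theta ->
  (forall b : B, exists a : A, theta a = b) ->
  wcont Astar Bstar theta ->
  johnson_pseudo_connes_amenable mulA Astar ->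
  johnson_pseudo_connes_amenable mulB Bstar.
Proof.
move=> [bA [SbA [S0A [SlinA _]]]] [bB [SbB _]] hl hmul hc hsurj hw.
move=> [I [le [ne [refl [trans [dir [m [e [bm [hm [he hconv]]]]]]]]]]].
have [M [M0 hM]] := lin_bounded hl hc.
have bdc := fun m' => @bidual_comp K A B theta M hl (ltW M0) hM m'.
have bbc := fun T => @bbil_comp K A B theta M hl hM T.
exists I, le; do 4 (split => //).
exists (fun i T => m i (Phi theta T)), (fun i => theta (e i)).
split; [|split; [|split]].
- by move=> i; apply: bdc.
- move=> i b T sT; have [a <-] := hsurj b.
  have e1 : Phi theta (ract mulB T (theta a)) = ract mulA (Phi theta T) a.
    by apply: funext => x; apply: funext => y; rewrite /Phi /ract hmul.
  have e2 : Phi theta (lact mulB (theta a) T) = lact mulA a (Phi theta T).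
    by apply: funext => x; apply: funext => y; rewrite /Phi /lact hmul.
  rewrite e1 e2; apply: hm.
  case: sT => bT [wl wr]; split; first exact: bbc.
  split.
  + have -> : (fun x => lact mulA x (Phi theta T)) =
              (fun x => Phi theta ((fun y => lact mulB y T) (theta x))).
      by apply: funext => x; apply: funext => y; apply: funext => z; rewrite /Phi /lact hmul.
    exact: (@wcont_comp K A B (B -> B -> K) (A -> A -> K) Astar Bstar (@bidual K B) (@bidual K A) theta (fun y => lact mulB y T) (Phi theta) hw wl bdc).
  + have -> : (fun x => ract mulA (Phi theta T) x) =
              (fun x => Phi theta ((fun y => ract mulB T y) (theta x))).
      by apply: funext => x; apply: funext => y; apply: funext => z; rewrite /Phi /ract hmul.
    exact: (@wcont_comp K A B (B -> B -> K) (A -> A -> K) Astar Bstar (@bidual K B) (@bidual K A) theta (fun y => ract mulB T y) (Phi theta) hw wr bdc).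
- move=> i phi Bphi.
  have := he i (fun a => phi (theta a))
    (wstar_comp S0A SlinA SbA hl hw Bphi (SbB _ Bphi).1).
  move=> ->; congr (m i _).
  by apply: funext => x; apply: funext => y; rewrite /Phi hmul.
- move=> b eps e0; have [a <-] := hsurj b.
  have [i0 hi0] := hconv a (eps / M) (divr_gt0 e0 M0).
  exists i0 => i li; rewrite -hmul -(linB hl).
  apply: le_lt_trans (hM _) _.
  by rewrite -ltr_pdivlMl // mulrC; exact: hi0.
Qed.
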